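(* Let $B=\mathrm{GF}(p^m)$ and $F=\mathrm{GF}(p^{mt})$. For $u,\alpha\in F$ let $p_{u,\alpha}(x)=\dfrac{\mathrm{Tr}_{F/B}\big(u(x-\alpha)\big)}{x-\alpha}\in F[x]$, and for distinct $\alpha,\beta\in F$ let $Q_{\alpha,\beta}(z)=\mathrm{Tr}_{F/B}\big(z(\beta-\alpha)\big)$. Let $\alpha,\beta\in F$ be distinct and let $z^*\in F$ be a root of $Q_{\alpha,\beta}(z)$ (equivalently of $Q_{\beta,\alpha}(z)$). Then (a) $p_{z^*,\alpha}(\beta)=0$. Moreover, if $t$ is divisible by the characteristic $p$ of $F$ and $B$, then (b) for every $u\in F$, $p_{u,\alpha}(\beta)$ is a root of both $Q_{\alpha,\beta}(z)$ and $Q_{\beta,\alpha}(z)$.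
   Context: $\mathrm{Tr}_{F/B}(x)=\sum_{i=0}^{t-1}x^{|B|^i}$ is the field trace from $F$ to $B$, viewed as a polynomial in $x$; $\mathrm{Tr}_{F/B}(u(x-\alpha))$ is divisible by $x-\alpha$ in $F[x]$, so $p_{u,\alpha}$ is a polynomial (of degree $|B|^{t-1}-1$ when $u\ne0$). *)

(* Defs.v *)
From HB Require Import structures.
From mathcomp Require Import all_boot all_algebra all_field.
Set Implicit Arguments. Unset Strict Implicit. Unset Printing Implicit Defensive.
Import GRing.Theory.
Local Open Scope ring_scope.

(* B = GF(q) with q = |B| = p^m, F = GF(q^t).  The relative trace
   Tr_{F/B}(x) = \sum_{i<t} x^(q^i), as a function on F ... *)
Definition trFB (F : finFieldType) (q t : nat) (x : F) : F :=
  \sum_(i < t) x ^+ (q ^ i).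

Definition trFB_poly (F : finFieldType) (q t : nat) (u alpha : F) : {poly F} :=
  \sum_(i < t) (u *: ('X - alpha%:P)) ^+ (q ^ i).

Definition p_ua (F : finFieldType) (q t : nat) (u alpha : F) : {poly F} :=
  trFB_poly q t u alpha %/ ('X - alpha%:P).

Definition Q_ab (F : finFieldType) (q t : nat) (alpha beta z : F) : F :=
  trFB q t (z * (beta - alpha)).

(* Main.v *)
Require Import Defs.
From mathcomp Require Import all_boot all_algebra all_field.
Local Open Scope ring_scope.
Import GRing.Theory.

Theorem lemma3 (p m t : nat) (F : finFieldType)
  (hp : prime p) (hm : (0 < m)%N) (ht : (0 < t)%N)
  (hchar : p \in [pchar F]) (hcard : #|F| = (p ^ (m * t))%N)
  (alpha beta : F) (hab : alpha != beta) :
  (forall z : F, Q_ab (p ^ m) t alpha beta z = 0 ->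
     (p_ua (p ^ m) t z alpha).[beta] = 0)
  /\
  ((p %| t)%N -> forall u : F,
     Q_ab (p ^ m) t alpha beta (p_ua (p ^ m) t u alpha).[beta] = 0 /\
     Q_ab (p ^ m) t beta alpha (p_ua (p ^ m) t u alpha).[beta] = 0).
Proof.
set q := (p ^ m)%N.
have qpos : forall i, (0 < q ^ i)%N by move=> i; rewrite expn_gt0 expn_gt0 prime_gt0.
have natq : forall i, [pchar F].-nat (q ^ i)%N.
  move=> i; rewrite (eq_pnat _ (pcharf_eq hchar)) /q -expnM pnatX pnat_id //.
set d := beta - alpha.
have dn0 : d != 0 by rewrite subr_eq0 eq_sym.
have claim1 : forall u : F, (p_ua q t u alpha).[beta] * d = trFB q t (u * d).
  move=> u.
  set P := \sum_(i < t) u ^+ (q ^ i) *: ('X - alpha%:P) ^+ (q ^ i).-1.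
  have EP : trFB_poly q t u alpha = P * ('X - alpha%:P).
    rewrite /trFB_poly /P big_distrl; apply: eq_bigr => i _ /=.
    rewrite /= exprZn -scalerAl -exprSr prednK //; exact: qpos.
  rewrite /p_ua EP mulpK ?polyXsubC_eq0 //.
  rewrite /P horner_sum big_distrl /trFB; apply: eq_bigr => i _ /=.
  rewrite hornerZ horner_exp hornerXsubC -mulrA -exprSr prednK // exprMn //.
split.
  move=> z; rewrite /Q_ab -/d -claim1 => /eqP; rewrite mulf_eq0 (negbTE dn0) orbF.
  by move/eqP.
move=> pt u.
have trN : forall x : F, trFB q t (- x) = - trFB q t x.
  move=> x; rewrite /trFB -sumrN; apply: eq_bigr => i _; exact: exprNn_pchar.
have trsum : forall (x : F) n, [pchar F].-nat n -> (trFB q t x) ^+ n = \sum_(i < t) (x ^+ (q ^ i)) ^+ n.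
  move=> x n hn; rewrite /trFB.
  apply: (big_morph (fun y : F => y ^+ n)) => [a b|]; first exact: exprDn_pchar.
  by rewrite expr0n; case: n hn => //; rewrite /pnat.
have cfix : forall y : F, (trFB q t y) ^+ q = trFB q t y.
  move=> y; rewrite -(expn1 q) trsum // expn1.
  have -> : \sum_(i < t) (y ^+ (q ^ i)) ^+ q = \sum_(i < t) y ^+ (q ^ i.+1).
    by apply: eq_bigr => i _; rewrite -exprM expnSr.
  rewrite /trFB; move: hcard; case Et: t => [|t'] hc; first by rewrite Et in ht.
  rewrite big_ord_recr big_ord_recl /= expn0 expr1.
  have -> : y ^+ (q ^ t'.+1) = y by rewrite /q -expnM -hc expf_card.
  by rewrite addrC; congr (_ + _); apply: eq_bigr => i _ /=.
have tr0 : forall y : F, trFB q t (trFB q t y) = 0.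
  move=> y; set c := trFB q t y.
  have ci : forall i, c ^+ (q ^ i) = c.
    elim=> [|i IH]; first by rewrite expn0 expr1.
    by rewrite expnSr exprM IH cfix.
  rewrite {1}/trFB; under eq_bigr => i _ do rewrite ci.
  rewrite sumr_const card_ord -mulr_natr.
  by move: pt; rewrite (dvdn_pcharf hchar) => /eqP ->; rewrite mulr0.
split; rewrite /Q_ab.
  by rewrite -/d claim1 tr0.
by rewrite -opprB -/d mulrN trN claim1 tr0 oppr0.
Qed.
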